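(* Let $N\ge 2$ and let $\mathcal{A}$ be an $M\times N$ circular Florentine rectangle over $\mathbb{Z}_N$ with rows $\pi_0,\dots,\pi_{M-1}$. For each $i$ let $\pi_i^{-1}$ denote the inverse permutation of $\pi_i$. Then each $\pi_i^{-1}$ is a permutation of $\mathbb{Z}_N$, and for all $0\le i\neq r\le M-1$ the map $x\mapsto \pi_i^{-1}(x)-\pi_r^{-1}(x) \pmod N$ is a permutation of $\mathbb{Z}_N$.
   Context: An $M\times N$ circular Florentine rectangle (CFR) over $\mathbb{Z}_N$ is an $M\times N$ array whose rows, viewed as maps $\pi_i:\mathbb{Z}_N\to\mathbb{Z}_N$ ($\pi_i(x)$ is the entry in row $i$, column $x$), are permutations of $\mathbb{Z}_N$, and such that for every $m\in\mathbb{Z}_N\setminus\{0\}$ and all $0\le i,j\le M-1$, $x,y\in\mathbb{Z}_N$, one has $(\pi_i(x),\pi_i(x+m))=(\pi_j(y),\pi_j(y+m))$ (indices modulo $N$) if and only if $i=j$ and $x=y$. *)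

(* Defs.v *)
From mathcomp Require Import all_boot all_order all_algebra all_fingroup.
Set Implicit Arguments. Unset Strict Implicit. Unset Printing Implicit Defensive.
Import GRing.Theory.
Local Open Scope ring_scope.

(* Z_N is represented by 'Z_N (valid for N >= 2, which is assumed).
   An M x N array with rows that are permutations of Z_N is a family
   A : 'I_M -> {perm 'Z_N}; row i is the permutation A i (column x |-> A i x). *)

Definition is_CFR (M N : nat) (A : 'I_M -> {perm 'Z_N}) : Prop :=
  forall (m : 'Z_N), m != 0 ->
  forall (i j : 'I_M) (x y : 'Z_N),
    ((A i x, A i (x + m)) = (A j y, A j (y + m))) <-> (i = j /\ x = y).

(* Main.v *)
Require Import Defs.
From mathcomp Require Import all_boot all_order all_algebra all_fingroup.
Import GRing.Theory.
Local Open Scope ring_scope.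

Theorem lemma4 (M N : nat) (hN : (1 < N)%N) (A : 'I_M -> {perm 'Z_N}) :
  is_CFR A ->
  (forall i : 'I_M, bijective (fun x : 'Z_N => ((A i)^-1)%g x)) /\
  (forall i r : 'I_M, i != r ->
     bijective (fun x : 'Z_N => ((A i)^-1)%g x - ((A r)^-1)%g x)).
Proof.
move=> hC; split.
  move=> i; apply: injF_bij; exact: perm_inj.
move=> i r hir; apply: injF_bij => x y /= hxy.
apply/eqP; apply/negPn/negP => nxy.
set m := ((A i)^-1)%g y - ((A i)^-1)%g x.
have hm : m != 0.
  rewrite /m subr_eq0; apply/negP => /eqP /perm_inj E.
  by rewrite E eqxx in nxy.
have hm' : m = ((A r)^-1)%g y - ((A r)^-1)%g x.
  rewrite /m -[X in X - _ = _](subrK (((A r)^-1)%g y)) -hxy.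
  rewrite addrAC.
  by rewrite [_ - _ - _]addrAC subrr add0r addrC.
have := (hC m hm i r (((A i)^-1)%g x) (((A r)^-1)%g x)).1.
case.
  - congr pair.
    + by rewrite !permKV.
    + by rewrite {1}/m addrC subrK hm' addrC subrK !permKV.
  - by move=> eir _; rewrite eir eqxx in hir.
Qed.
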